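(* Consider plain SGD (no momentum) with scalar learning rate $\lambda>0$ and batch size $S$ on linear regression with label noise in the limit $N\to\infty$. Let $G:=2I_D-\lambda\left(1+\frac1S\right)A$ and $\kappa:=\frac{\mathrm{Tr}[AG^{-1}]}{1-\frac\lambda S\mathrm{Tr}[AG^{-1}]}$ (with $G$ invertible and the denominator nonzero). Then the expected training loss $L_{\rm train}:=\mathbb{E}_{\mathbf{w}}[L(\mathbf{w})]$ and the expected test loss $L_{\rm test}:=\frac12\mathbb{E}_{\mathbf{w}}\mathbb{E}_x[((\mathbf{w}-\mathbf{u})^{\mathrm T}x)^2]$ are $$L_{\rm train}=\frac{\sigma^2}{2}\left(1+\frac{\lambda\kappa}{S}\right),\qquad L_{\rm test}=\frac{\lambda\sigma^2}{2S}\kappa.$$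
   Context: Data: $x_i\in\mathbb{R}^D$ i.i.d. $\mathcal N(0,A)$, $A$ symmetric positive definite; $y_i=\mathbf{u}^{\mathrm T}x_i+\epsilon_i$ with $\epsilon_i$ i.i.d., independent of the $x_i$, mean $0$, variance $\sigma^2$; $L(\mathbf{w})=\frac1{2N}\sum_i(\mathbf{w}^{\mathrm T}x_i-y_i)^2$. SGD: $\mathbf{w}_t=\mathbf{w}_{t-1}-\frac\lambda S\sum_{i\in B_t}\nabla\ell_i(\mathbf{w}_{t-1})$. $\mathbb{E}_{\mathbf{w}}$ is over the stationary distribution, which has mean $\mathbf{u}$ and covariance $\Sigma$ satisfying $\lambda(A\Sigma+\Sigma A)-\lambda^2A\Sigma A=\lambda^2C$ with $C=\frac1S(A\Sigma A+\mathrm{Tr}[A\Sigma]A+\sigma^2A)$. *)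

(* Defs.v *)
From HB Require Import structures.
From mathcomp Require Import all_boot all_order all_algebra.
From mathcomp Require Import all_classical all_reals all_analysis.
Set Implicit Arguments. Unset Strict Implicit. Unset Printing Implicit Defensive.
Import Order.TTheory GRing.Theory Num.Theory.
Local Open Scope ring_scope.

Definition sym_posdef (R : realType) (D : nat) (A : 'M[R]_D) : Prop :=
  A^T = A /\ forall v : 'cV[R]_D, v != 0 -> 0 < (v^T *m A *m v) 0 0.

Definition label (R : realType) (D : nat) (Tx : Type) (u : 'cV[R]_D)
  (x : 'I_D -> Tx -> R) (eps : Tx -> R) : Tx -> R :=
  fun t => \sum_(i < D) u i 0 * x i t + eps t.

(* N -> oo limit of L(v) = (1/2N) sum_i (v^T x_i - y_i)^2 : the population loss
   E_{x,eps}[ (1/2)(v^T x - y)^2 ] *)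
Definition pop_loss (R : realType) (dx : measure_display) (Tx : measurableType dx)
  (Q : probability Tx R) (D : nat) (x : 'I_D -> Tx -> R) (eps : Tx -> R)
  (u : 'cV[R]_D) (v : 'I_D -> R) : \bar R :=
  'E_Q[fun t => 2^-1 * (\sum_(i < D) v i * x i t - label u x eps t) ^+ 2].

Definition L_train (R : realType) (dw : measure_display) (Tw : measurableType dw)
  (P : probability Tw R) (dx : measure_display) (Tx : measurableType dx)
  (Q : probability Tx R) (D : nat) (w : 'I_D -> Tw -> R)
  (x : 'I_D -> Tx -> R) (eps : Tx -> R) (u : 'cV[R]_D) : \bar R :=
  (\int[P]_s pop_loss Q x eps u (fun i => w i s))%E.

Definition L_test (R : realType) (dw : measure_display) (Tw : measurableType dw)
  (P : probability Tw R) (dx : measure_display) (Tx : measurableType dx)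
  (Q : probability Tx R) (D : nat) (w : 'I_D -> Tw -> R)
  (x : 'I_D -> Tx -> R) (u : 'cV[R]_D) : \bar R :=
  (\int[P]_s 'E_Q[fun t => (2^-1 * (\sum_(i < D) (w i s - u i 0) * x i t) ^+ 2)%R])%E.

Definition noiseC (R : realType) (D : nat) (A Sigma : 'M[R]_D) (S : nat) (sigma : R)
  : 'M[R]_D :=
  (S%:R)^-1 *: (A *m Sigma *m A + \tr (A *m Sigma) *: A + sigma ^+ 2 *: A).

Definition Gmat (R : realType) (D : nat) (A : 'M[R]_D) (lambda : R) (S : nat)
  : 'M[R]_D :=
  2%:M - (lambda * (1 + (S%:R)^-1)) *: A.

Definition kappa (R : realType) (D : nat) (A : 'M[R]_D) (lambda : R) (S : nat) : R :=
  \tr (A *m invmx (Gmat A lambda S)) /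
  (1 - lambda / S%:R * \tr (A *m invmx (Gmat A lambda S))).

(* Main.v *)
Require Import Defs.
From HB Require Import structures.
From mathcomp Require Import all_boot all_order all_algebra.
From mathcomp Require Import all_classical all_reals all_analysis.
From mathcomp Require Import ring lra.
Import Order.TTheory GRing.Theory Num.Theory.
Local Open Scope ring_scope.

Lemma E_sum d (T : measurableType d) (R : realType) (P : probability T R) (I : Type)
  (r : seq I) (F : I -> T -> R) :
  (forall i, F i \in Lfun P 1) ->
  (fun t => \sum_(i <- r) F i t) \in Lfun P 1 /\
  ('E_P[fun t => (\sum_(i <- r) F i t)%R] = \sum_(i <- r) 'E_P[F i])%E.
Proof.
move=> HF; elim: r => [|a r [IH1 IH2]].
  have -> : (fun t => \sum_(i <- [::]) F i t) = cst 0.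
    by apply/funext => t; rewrite big_nil.
  by split; [exact: Lfun_cst | rewrite big_nil expectation_cst].
have -> : (fun t => \sum_(i <- a :: r) F i t) = F a \+ (fun t => \sum_(i <- r) F i t).
  by apply/funext => t; rewrite big_cons.
split; first by rewrite rpredD.
by rewrite expectationD // IH2 big_cons.
Qed.

Lemma L1_scale d (T : measurableType d) (R : realType) (P : probability T R) (f : T -> R) c :
  f \in Lfun P 1 -> c \o* f \in Lfun P 1.
Proof. by move=> h; apply: Lfun_scale. Qed.
Arguments L1_scale {d T R P f} c.
Arguments E_sum {d T R P I} r {F}.

Lemma inner_train (R : realType) (D : nat) (A : 'M[R]_D) (u : 'cV[R]_D) (sigma : R)
  (dx : measure_display) (Tx : measurableType dx) (Q : probability Tx R)
  (x : 'I_D -> Tx -> R) (eps : Tx -> R) (v : 'I_D -> R) :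
  (forall i, x i \in Lfun Q 2%:E) -> eps \in Lfun Q 2%:E ->
  (forall i j, ('E_Q[x i * x j] = (A i j)%:E)%E) ->
  ('E_Q[eps ^+ 2] = (sigma ^+ 2)%:E)%E ->
  (forall i, ('E_Q[x i * eps] = 0)%E) ->
  pop_loss Q x eps u v =
  (2^-1 * (\sum_i \sum_j (v i - u i 0) * (v j - u j 0) * A i j) + 2^-1 * sigma ^+ 2)%:E.
Proof.
move=> Lx Le HA He Hxe.
have HA' : forall i j, ('E_Q[(x i \* x j)%R] = (A i j)%:E)%E := HA.
have He' : ('E_Q[(eps \* eps)%R] = (sigma ^+ 2)%:E)%E by rewrite -He; congr expectation; apply/funext=> t /=; rewrite expr2.
have Hxe' : forall i, ('E_Q[(x i \* eps)%R] = 0)%E := Hxe.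
set e := fun i => v i - u i 0.
rewrite /pop_loss.
transitivity ('E_Q[((fun t => \sum_(i < D) (fun t => \sum_(j < D) ((2^-1 * (e i * e j)) \o* (x i \* x j)) t) t) \+
  ((fun t => \sum_(i < D) ((- e i) \o* (x i \* eps)) t) \+ (2^-1 \o* (eps \* eps))))%R])%E.
  congr expectation; apply/funext => t /=.
  rewrite /label.
  have h1 : \sum_(i < D) v i * x i t - (\sum_(i < D) u i 0 * x i t + eps t) = \sum_i e i * x i t - eps t.
    rewrite opprD addrA -sumrB; congr (_ - _); apply: eq_bigr => i _; rewrite /e; ring.
  have h2 : \sum_(i < D) \sum_(j < D) (x i t * x j t * (2^-1 * (e i * e j))) = 2^-1 * ((\sum_i e i * x i t) * (\sum_i e i * x i t)).
    rewrite mulr_suml mulr_sumr; apply: eq_bigr => i _; rewrite mulr_sumr mulr_sumr; apply: eq_bigr => j _; ring.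
  have h3 : \sum_(i < D) x i t * eps t * - e i = - ((\sum_i e i * x i t) * eps t).
    rewrite mulr_suml -sumrN; apply: eq_bigr => i _; ring.
  rewrite h1 h2 h3.
move: (\sum_i e i * x i t) (eps t) => a b; field.
  by [].
have L1xx : forall i j, (x i \* x j)%R \in Lfun Q 1 := fun i j => Lfun2_mul_Lfun1 (Lx i) (Lx j).
have L1xe : forall i, (x i \* eps)%R \in Lfun Q 1 := fun i => Lfun2_mul_Lfun1 (Lx i) Le.
have L1ee : (eps \* eps)%R \in Lfun Q 1 := Lfun2_mul_Lfun1 Le Le.
have LF : forall i j, ((2^-1 * (e i * e j)) \o* (x i \* x j)) \in Lfun Q 1.
  by move=> i j; apply: L1_scale.
have EFi i := E_sum (index_enum 'I_D) (LF i).
have LG := E_sum (index_enum 'I_D) (fun i => (EFi i).1).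
have LH := E_sum (index_enum 'I_D) (fun i => L1_scale (- e i) (L1xe i)).
rewrite expectationD; [|exact: LG.1| apply: rpredD; [exact: LH.1|exact: L1_scale]].
rewrite expectationD; [|exact: LH.1|exact: L1_scale].
rewrite LG.2 LH.2.
under eq_bigr => i _ do rewrite (EFi i).2.
under eq_bigr => i _ do under eq_bigr => j _ do rewrite expectationZl ?L1xx // HA'.
under [X in (_ + (X + _))%E]eq_bigr => i _ do rewrite expectationZl ?L1xe // Hxe' mule0.
have Hc : ('E_Q[(2^-1 \o* (eps \* eps))%R] = (2^-1)%:E * (sigma^+2)%:E)%E.
  by rewrite expectationZl // He'.
rewrite Hc [X in (_ + (X + _))%E]big1 // add0e.
under eq_bigr => i _ do rewrite sumEFin.
rewrite sumEFin -EFinM -EFinD; congr (EFin (_ + _)).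
rewrite mulr_sumr; apply: eq_bigr => i _; rewrite mulr_sumr; apply: eq_bigr => j _.
rewrite /e; ring.
Qed.

Lemma inner_test (R : realType) (D : nat) (A : 'M[R]_D) (u : 'cV[R]_D)
  (dx : measure_display) (Tx : measurableType dx) (Q : probability Tx R)
  (x : 'I_D -> Tx -> R) (v : 'I_D -> R) :
  (forall i, x i \in Lfun Q 2%:E) ->
  (forall i j, ('E_Q[x i * x j] = (A i j)%:E)%E) ->
  ('E_Q[fun t => (2^-1 * (\sum_(i < D) (v i - u i 0) * x i t) ^+ 2)%R])%E =
  (2^-1 * (\sum_i \sum_j (v i - u i 0) * (v j - u j 0) * A i j) + 0)%:E.
Proof.
move=> Lx HA.
have HA' : forall i j, ('E_Q[(x i \* x j)%R] = (A i j)%:E)%E := HA.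
set e := fun i => v i - u i 0.
transitivity ('E_Q[(fun t => \sum_(i < D) (fun t => \sum_(j < D) ((2^-1 * (e i * e j)) \o* (x i \* x j)) t) t)%R])%E.
  congr expectation; apply/funext => t /=.
  rewrite expr2 mulr_suml mulr_sumr; apply: eq_bigr => i _; rewrite mulr_sumr mulr_sumr; apply: eq_bigr => j _.
  rewrite /e /=; ring.
have L1xx : forall i j, (x i \* x j)%R \in Lfun Q 1 := fun i j => Lfun2_mul_Lfun1 (Lx i) (Lx j).
have LF : forall i j, ((2^-1 * (e i * e j)) \o* (x i \* x j)) \in Lfun Q 1.
  by move=> i j; apply: L1_scale.
have EFi i := E_sum (index_enum 'I_D) (LF i).
have LG := E_sum (index_enum 'I_D) (fun i => (EFi i).1).
rewrite LG.2.
under eq_bigr => i _ do rewrite (EFi i).2.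
under eq_bigr => i _ do under eq_bigr => j _ do rewrite expectationZl ?L1xx // HA'.
under eq_bigr => i _ do rewrite sumEFin.
rewrite sumEFin addr0; congr EFin.
rewrite mulr_sumr; apply: eq_bigr => i _; rewrite mulr_sumr; apply: eq_bigr => j _.
rewrite /e; ring.
Qed.

Lemma outer (R : realType) (D : nat) (A : 'M[R]_D) (u : 'cV[R]_D) (Sigma : 'M[R]_D) (c : R)
  (dw : measure_display) (Tw : measurableType dw) (P : probability Tw R)
  (w : 'I_D -> Tw -> R) :
  (forall i, w i \in Lfun P 2%:E) ->
  (forall i, ('E_P[w i] = (u i 0)%:E)%E) ->
  (forall i j, covariance P (w i) (w j) = (Sigma i j)%:E) ->
  (\int[P]_s (2^-1 * (\sum_i \sum_j (w i s - u i 0) * (w j s - u j 0) * A i j) + c)%:E)%E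
  = (2^-1 * (\sum_i \sum_j A i j * Sigma i j) + c)%:E.
Proof.
move=> Lw Hm Hc.
pose e i := (w i \- cst (u i 0))%R.
have Le : forall i, e i \in Lfun P 2%:E.
  have p12 : (1 <= (2%:E : \bar R))%E by rewrite lee_fin ler1n.
  by move=> i; rewrite rpredB ?Lw ?Lfun_cst.
have Lee : forall i j, (e i \* e j)%R \in Lfun P 1 := fun i j => Lfun2_mul_Lfun1 (Le i) (Le j).
have Hcov : forall i j, ('E_P[(e i \* e j)%R] = (Sigma i j)%:E)%E.
  move=> i j; rewrite -Hc covariance.unlock /= !Hm /=; by [].
have LF : forall i j, ((2^-1 * A i j) \o* (e i \* e j)) \in Lfun P 1.
  by move=> i j; apply: L1_scale.
have EFi i := E_sum (index_enum 'I_D) (LF i).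
have LG := E_sum (index_enum 'I_D) (fun i => (EFi i).1).
transitivity ('E_P[((fun t => \sum_(i < D) (fun t => \sum_(j < D) ((2^-1 * A i j) \o* (e i \* e j)) t) t) \+ cst c)%R])%E.
  rewrite expectation.unlock; apply: eq_integral => s _; congr EFin; rewrite /=; congr (_ + _).
  rewrite mulr_sumr; apply: eq_bigr => i _; rewrite mulr_sumr; apply: eq_bigr => j _.
  rewrite /e /=; ring.
rewrite expectationD; [|exact: LG.1|exact: Lfun_cst].
rewrite LG.2 expectation_cst.
under eq_bigr => i _ do rewrite (EFi i).2.
under eq_bigr => i _ do under eq_bigr => j _ do rewrite expectationZl ?Lee // Hcov.
under eq_bigr => i _ do rewrite sumEFin.
rewrite sumEFin -EFinD; congr (EFin (_ + _)).
rewrite mulr_sumr; apply: eq_bigr => i _; rewrite mulr_sumr; apply: eq_bigr => j _.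
ring.
Qed.

Lemma scalar_fin (R : realFieldType) (T t l s2 s : R) :
  s != 0 -> 1 - l / s * t != 0 -> T = l / s * (T + s2) * t ->
  2^-1 * T + 2^-1 * s2 = s2 / 2 * (1 + l * (t / (1 - l / s * t)) / s) /\
  2^-1 * T + 0 = l * s2 / (2 * s) * (t / (1 - l / s * t)).
Proof.
move=> s0 d0 HT.
have E1 : T * (1 - l / s * t) = l / s * s2 * t.
  transitivity (T - l / s * T * t); first ring.
  by rewrite {1}HT; ring.
have d1 : s - l * t != 0.
  have -> : s - l * t = s * (1 - l / s * t) by field.
  by rewrite mulf_neq0.
have -> : T = (T * (1 - l / s * t)) / (1 - l / s * t) by field; rewrite s0 d1.
by rewrite E1; split; field; rewrite s0 d1.
Qed.

Lemma lin_alg (R : realType) (D : nat) (A Sigma : 'M[R]_D) (lambda sigma : R) (S : nat) :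
  0 < lambda -> (0 < S)%N ->
  lambda *: (A *m Sigma + Sigma *m A) - lambda ^+ 2 *: (A *m Sigma *m A)
    = lambda ^+ 2 *: noiseC A Sigma S sigma ->
  Gmat A lambda S \in unitmx ->
  \tr (A *m Sigma) = lambda / S%:R * (\tr (A *m Sigma) + sigma ^+ 2) * \tr (A *m invmx (Gmat A lambda S)).
Proof.
move=> l0 S0 H HG.
have Sn0 : (S%:R : R) != 0 by rewrite pnatr_eq0 -lt0n.
have ln0 : lambda != 0 by rewrite gt_eqF.
have [T HT] : exists T, T = \tr (A *m Sigma) by exists (\tr (A *m Sigma)).
rewrite -HT.
move: H; rewrite /noiseC -HT => H.
set c := lambda * (1 + (S%:R)^-1).
set k := lambda / S%:R * (T + sigma ^+ 2).
have HM : A *m Sigma + Sigma *m A - c *: (A *m Sigma *m A) = k *: A.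
  apply: (scalerI ln0).
  move: H; rewrite /c /k.
  move: (A *m Sigma) (Sigma *m A) (A *m Sigma *m A) => X Y Z H.
  apply/matrixP => i j; move/matrixP: H => /(_ i j); rewrite !mxE => H.
  match goal with H : ?p = ?q |- ?a = ?b =>
    have E : a - b = p - q by field end.
  by apply/eqP; rewrite -subr_eq0 E H subrr.
set G := Gmat A lambda S.
have HG2 : G *m Sigma *m A + A *m Sigma *m G = 2 *: (A *m Sigma + Sigma *m A - c *: (A *m Sigma *m A)).
  rewrite /G /Gmat -/c.
  rewrite !(mulmxBl, mulmxBr, mul_scalar_mx, mul_mx_scalar) -!scalemxAl -!scalemxAr ?mulmxA.
  move: (A *m Sigma *m A) (A *m Sigma) (Sigma *m A) => Z X Y.
  apply/matrixP => i j; rewrite !mxE; ring.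
have Htr : \tr (invmx G *m (G *m Sigma *m A + A *m Sigma *m G)) = 2 * T.
  rewrite mulmxDr mxtraceD !mulmxA mulVmx // mul1mx.
  rewrite mxtrace_mulC (mxtrace_mulC _ G) !mulmxA mulmxV // mul1mx HT; ring.
move: Htr; rewrite HG2 HM -!scalemxAr !mxtraceZ mxtrace_mulC => Htr.
have two0 : (2:R) != 0 by rewrite pnatr_eq0.
by apply: (mulfI two0); rewrite -Htr.
Qed.

Theorem theorem8 (R : realType) (D : nat) (A : 'M[R]_D) (u : 'cV[R]_D)
  (Sigma : 'M[R]_D) (lambda sigma : R) (S : nat)
  (dx : measure_display) (Tx : measurableType dx) (Q : probability Tx R)
  (x : 'I_D -> Tx -> R) (eps : Tx -> R)
  (dw : measure_display) (Tw : measurableType dw) (P : probability Tw R)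
  (w : 'I_D -> Tw -> R) :
  sym_posdef A -> 0 < lambda -> (0 < S)%N ->
  (* data: x ~ (0, A) (second moments), label noise eps with mean 0,
     variance sigma^2, independent of x *)
  (forall i, x i \in Lfun Q 2%:E) -> eps \in Lfun Q 2%:E ->
  (forall i, ('E_Q[x i] = 0)%E) ->
  (forall i j, ('E_Q[x i * x j] = (A i j)%:E)%E) ->
  ('E_Q[eps] = 0)%E -> ('E_Q[eps ^+ 2] = (sigma ^+ 2)%:E)%E ->
  (forall i, ('E_Q[x i * eps] = 0)%E) ->
  (* stationary distribution of w: mean u, covariance Sigma *)
  (forall i, w i \in Lfun P 2%:E) ->
  (forall i, ('E_P[w i] = (u i 0)%:E)%E) ->
  (forall i j, covariance P (w i) (w j) = (Sigma i j)%:E) ->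
  lambda *: (A *m Sigma + Sigma *m A) - lambda ^+ 2 *: (A *m Sigma *m A)
    = lambda ^+ 2 *: noiseC A Sigma S sigma ->
  Gmat A lambda S \in unitmx ->
  1 - lambda / S%:R * \tr (A *m invmx (Gmat A lambda S)) != 0 ->
  L_train P Q w x eps u = (sigma ^+ 2 / 2 * (1 + lambda * kappa A lambda S / S%:R))%:E /\
  L_test P Q w x u = (lambda * sigma ^+ 2 / (2 * S%:R) * kappa A lambda S)%:E.

Proof.
move=> HA l0 S0 Lx Le Hx0 HAx He0 He Hxe Lw Hm Hc H HG Hd.
have Hsym : forall i j, Sigma i j = Sigma j i.
  by move=> i j; have := Hc i j; rewrite covarianceC Hc; case=> ->.
have Htr : \sum_i \sum_j A i j * Sigma i j = \tr (A *m Sigma).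
  rewrite /mxtrace; apply: eq_bigr => i _; rewrite mxE; apply: eq_bigr => j _.
  by rewrite Hsym.
have HT := lin_alg _ _ A Sigma lambda sigma S l0 S0 H HG.
have Sn0 : (S%:R : R) != 0 by rewrite pnatr_eq0 -lt0n.
have [Ftrain Ftest] := @scalar_fin _ _ _ _ _ _ Sn0 Hd HT.
split.
- rewrite /L_train.
  under eq_integral => s _ do rewrite (inner_train _ _ A u sigma _ _ Q x eps (fun i => w i s) Lx Le HAx He Hxe).
  rewrite (outer _ _ A u Sigma _ _ _ P w Lw Hm Hc) Htr; congr EFin.
  exact: Ftrain.
- rewrite /L_test.
  under eq_integral => s _ do rewrite (inner_test _ _ A u _ _ Q x (fun i => w i s) Lx HAx).
  rewrite (outer _ _ A u Sigma _ _ _ P w Lw Hm Hc) Htr; congr EFin.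
  exact: Ftest.
Qed.
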